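(* Let $S=\{R_0,\dots,R_d\}$ be a quasi-thin scheme and let $n$ be the number of triples $(u,v,w)\in\{0,\dots,d\}^3$ with $p_{uv}^w\neq 0$. Then $n=(d+1)^2+|\{(a,b):R_a,R_b\in S,\ |R_{a'}R_b|=2\}|$.
   Context: Let $X$ be a nonempty finite set. A scheme of class $d$ on $X$ is a partition $S=\{R_0,\dots,R_d\}$ of $X\times X$ into nonempty sets such that $R_0=\{(b,b):b\in X\}$; for each $c$ there is $c'$ with $R_{c'}=\{(f,e):(e,f)\in R_c\}$; and for all $i,j,k$ the intersection number $p_{ij}^k=|\{\ell\in X:(m,\ell)\in R_i,(\ell,n)\in R_j\}|$ does not depend on $(m,n)\in R_k$. The valency of $R_a$ is $k_a=p_{aa'}^0$; $S$ is quasi-thin if all $k_a\le 2$. The complex product is $R_aR_b=\{R_c\in S:p_{ab}^c>0\}$. *)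

(* Defs.v *)
From mathcomp Require Import all_boot.
Set Implicit Arguments. Unset Strict Implicit. Unset Printing Implicit Defensive.

(* A scheme of class d on a finite set X is encoded by the function
   R : X -> X -> 'I_d.+1 sending (x,y) to the index c with (x,y) \in R_c.
   This makes {R_0,...,R_d} automatically a partition of X * X into
   (possibly empty) classes; nonemptiness is required in [is_scheme]. *)

Section Scheme.
Variables (X : finType) (d : nat).
Implicit Types (R : X -> X -> 'I_d.+1) (a b c i j k : 'I_d.+1).

Definition pcount R i j (m n : X) : nat :=
  #|[set l : X | (R m l == i) && (R l n == j)]|.

Definition is_transpose R c c' : bool :=
  [forall x : X, forall y : X, (R y x == c') == (R x y == c)].

Definition is_scheme R : Prop :=
  [/\ (forall c, exists x : X, exists y : X, R x y = c),
      (forall x y : X, (R x y == ord0) = (x == y)),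
      (forall c, exists c', is_transpose R c c') &
      (forall i j k (m n m2 n2 : X), R m n = k -> R m2 n2 = k ->
          pcount R i j m n = pcount R i j m2 n2)].

(* intersection number p_{ij}^k, evaluated at some pair (m,n) \in R_k *)
Definition pnum R i j k : nat :=
  match [pick mn : X * X | R mn.1 mn.2 == k] with
  | Some mn => pcount R i j mn.1 mn.2
  | None => 0
  end.

(* the index c' (unique in a scheme) *)
Definition tr R c : 'I_d.+1 := odflt c [pick c' | is_transpose R c c'].

Definition valency R a : nat := pnum R a (tr R a) ord0.

Definition quasi_thin R : Prop := forall a, valency R a <= 2.

Definition cprod R a b : {set 'I_d.+1} := [set c | 0 < pnum R a b c].

End Scheme.

(* Main.v *)
Require Import Defs.
From mathcomp Require Import all_boot.
Set Implicit Arguments. Unset Strict Implicit. Unset Printing Implicit Defensive.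

Section Helpers.
Variables (X : finType) (d : nat) (R : X -> X -> 'I_d.+1).
Hypothesis HS : is_scheme R.

Lemma pnumE i j k m n : R m n = k -> pnum R i j k = pcount R i j m n.
Proof.
case: HS => _ _ _ Hreg Hmn; rewrite /pnum.
case: pickP => [[a b] /= /eqP Hab|/(_ (m, n)) /=]; last by rewrite Hmn eqxx.
exact: Hreg Hab Hmn.
Qed.

Lemma trP c x y : (R y x == tr R c) = (R x y == c).
Proof.
case: HS => _ _ Htr _; rewrite /tr.
case: pickP => [c' /forallP /(_ x) /forallP /(_ y) /eqP //|Hn].
by have [c' Hc'] := Htr c; move: (Hn c'); rewrite Hc'.
Qed.

Lemma trK : involutive (tr R).
Proof.
move=> c; case: HS => [Hne _ _ _]; have [x [y Hxy]] := Hne c.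
have : R x y == tr R (tr R c) by rewrite trP trP Hxy.
by rewrite Hxy => /eqP.
Qed.

Definition outdeg c x := #|[set z | R x z == c]|.

Lemma outdegE c x : outdeg c x = valency R c.
Proof.
case: HS => _ H0 _ _.
rewrite /valency (@pnumE _ _ _ x x); last by apply/eqP; rewrite H0.
rewrite /pcount /outdeg; apply: eq_card => z; rewrite !inE trP.
by case: (R x z == c).
Qed.

Lemma outdeg_gt0 c x : 0 < outdeg c x.
Proof.
case: HS => [Hne _ _ _]; have [m [n Hmn]] := Hne c.
rewrite outdegE -(outdegE c m); apply/card_gt0P; exists n; by rewrite inE Hmn.
Qed.


Lemma cprod_gt0 u v : 0 < #|cprod R u v|.
Proof.
have [Hne _ _ _] := HS; have [x [y Hxy]] := Hne u.
have /card_gt0P [z] := outdeg_gt0 v y; rewrite inE => /eqP Hyz.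
apply/card_gt0P; exists (R x z); rewrite inE (@pnumE _ _ _ x z) //.
by apply/card_gt0P; exists y; rewrite inE Hxy Hyz !eqxx.
Qed.

Hypothesis HQ : quasi_thin R.

Lemma outdeg_le2 c x : outdeg c x <= 2.
Proof. by rewrite outdegE; apply: HQ. Qed.

Lemma cprod_le2 u v : #|cprod R u v| <= 2.
Proof.
have [Hne _ _ _] := HS; have [x [y0 Hxy0]] := Hne u.
pose Pp := fun p : X * X => (R x p.1 == u) && (R p.1 p.2 == v).
pose f := fun p : X * X => R x p.2.
have HPup : #|[set p | Pp p]| <= 2 * outdeg u x.
  rewrite -sum1dep_card (partition_big fst (fun y => R x y == u)); last first.
    by move=> p /andP [].
  apply: (@leq_trans (\sum_(y | R x y == u) 2)).
    apply: leq_sum => y Hy; rewrite sum1dep_card.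
    apply: (@leq_trans #|[set (y, z) | z in [set z | R y z == v]]|);
      last by apply: leq_trans (leq_imset_card _ _) (outdeg_le2 v y).
    apply/subset_leq_card/subsetP => [[a b]]; rewrite !inE /Pp /= => /andP [/andP [_ Hab] /eqP Ha].
    by subst a; apply/imsetP; exists b; rewrite ?inE.
  by rewrite (eq_bigr (fun _ => 1 * 2)) // -big_distrl /= sum1dep_card mulnC.
have Hsub : cprod R u v \subset f @: [set p | Pp p].
  apply/subsetP => w; rewrite inE => Hw.
  have /card_gt0P [z] := outdeg_gt0 w x; rewrite inE => /eqP Hxz.
  move: Hw; rewrite (@pnumE _ _ _ x z) // => /card_gt0P [y]; rewrite inE => /andP [Hxy Hyz].
  by apply/imsetP; exists (y, z); rewrite // inE /Pp /= Hxy Hyz.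
have [Y1|Y2] := leqP (outdeg u x) 1.
  apply: leq_trans (subset_leq_card Hsub) _; apply: leq_trans (leq_imset_card _ _) _.
  by apply: leq_trans HPup _; move: Y1; case: (outdeg u x) => [|[|]].
have HY2 : outdeg u x = 2 by apply/eqP; rewrite eqn_leq outdeg_le2 Y2.
have Hlow : 2 * #|cprod R u v| <= #|[set p | Pp p]|.
  rewrite -sum1dep_card (partition_big f predT) //.
  apply: (@leq_trans (\sum_(w in cprod R u v) 2)).
    by rewrite sum_nat_const mulnC.
  rewrite [X in _ <= X](bigID (fun w => w \in cprod R u v)) /=.
  apply: leq_trans (leq_addr _ _).
  apply: leq_sum => w Hw; rewrite sum1dep_card.
  have /card_gt0P [z0] := outdeg_gt0 w x; rewrite inE => /eqP Hxz0.
  move: (Hw); rewrite inE (@pnumE _ _ _ x z0) // => /card_gt0P [y1].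
  rewrite inE => /andP [/eqP Hxy1 /eqP Hy1z0].
  apply/card_gt1P.
  case: (boolP [exists z, (R x z == w) && (z != z0)]) => [/existsP [z1 /andP [/eqP Hxz1 Hz1]] | Hno].
    move: (Hw); rewrite inE (@pnumE _ _ _ x z1) // => /card_gt0P [y'].
    rewrite inE => /andP [/eqP Hxy' /eqP Hy'z1].
    exists (y1, z0), (y', z1); split; rewrite ?inE /Pp /f /= ?Hxy1 ?Hy1z0 ?Hxz0 ?Hxy' ?Hy'z1 ?Hxz1 ?eqxx //.
    by apply/eqP => [[_ E]]; rewrite E eqxx in Hz1.
  have Huniq : forall z, R x z = w -> z = z0.
    move=> z Hz; apply/eqP; apply: contraNT Hno => Hn; apply/existsP; exists z.
    by rewrite Hz eqxx.
  have /card_gt1P [a [b [Ha Hb Hab]]] : 1 < outdeg u x by rewrite HY2.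
  have [y2 [Hy2 Hy21]] : exists y2, R x y2 = u /\ y2 != y1.
    rewrite !inE in Ha Hb; case: (eqVneq a y1) => [Ea|Na].
      by subst a; exists b; split; [exact/eqP | rewrite eq_sym].
    by exists a; split; [exact/eqP | done].
  have H1 : 0 < pcount R w (tr R v) x y1.
    by apply/card_gt0P; exists z0; rewrite inE Hxz0 trP Hy1z0 !eqxx.
  rewrite -(pnumE w (tr R v) Hxy1) (pnumE _ _ Hy2) in H1.
  move: H1 => /card_gt0P [l]; rewrite inE => /andP [/eqP Hxl Hly2].
  rewrite trP in Hly2; have El := Huniq l Hxl; subst l.
  exists (y1, z0), (y2, z0); split; rewrite ?inE /Pp /f /= ?Hxy1 ?Hy1z0 ?Hxz0 ?Hy2 ?Hly2 ?eqxx //.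
  by apply/eqP => [[E]]; rewrite E eqxx in Hy21.
by rewrite -(leq_pmul2l (isT : 0 < 2)); apply: leq_trans Hlow (leq_trans HPup _); rewrite HY2.
Qed.

End Helpers.

Theorem lemma2p2 (X : finType) (d : nat) (R : X -> X -> 'I_d.+1) :
  is_scheme R -> quasi_thin R ->
  #|[set t : 'I_d.+1 * 'I_d.+1 * 'I_d.+1 | pnum R t.1.1 t.1.2 t.2 != 0]|
  = d.+1 ^ 2 + #|[set ab : 'I_d.+1 * 'I_d.+1 | #|cprod R (tr R ab.1) ab.2| == 2]|.
Proof.
move=> HS HQ.
pose h := fun ab : 'I_d.+1 * 'I_d.+1 => (tr R ab.1, ab.2).
have hinj : injective h.
  move=> [a b] [a' b'] [E1 E2]; rewrite /= in E1 E2.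
  by rewrite -(trK HS a) E1 trK // E2.
have -> : #|[set ab : 'I_d.+1 * 'I_d.+1 | #|cprod R (tr R ab.1) ab.2| == 2]|
        = #|[set ab : 'I_d.+1 * 'I_d.+1 | #|cprod R ab.1 ab.2| == 2]|.
  rewrite -!sum1dep_card [RHS](reindex_inj hinj) //.
rewrite -sum1dep_card (partition_big (fun t => t.1) predT) //=.
have Hin : forall ab : 'I_d.+1 * 'I_d.+1,
    \sum_(t | (pnum R t.1.1 t.1.2 t.2 != 0) && (t.1 == ab)) 1
    = 1 + (#|cprod R ab.1 ab.2| == 2).
  move=> ab; rewrite sum1dep_card.
  have -> : [set t | (pnum R t.1.1 t.1.2 t.2 != 0) && (t.1 == ab)]
          = [set (ab, c) | c in cprod R ab.1 ab.2].
    apply/setP => [[ab' c]]; rewrite !inE /=; apply/idP/imsetP.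
      by move=> /andP [Hp /eqP E]; subst ab'; exists c; rewrite // inE lt0n.
    by move=> [c' Hc' [-> ->]]; rewrite eqxx andbT -lt0n; rewrite inE in Hc'.
  rewrite card_imset; last by move=> c1 c2 [].
  have := cprod_gt0 HS ab.1 ab.2; have := cprod_le2 HS HQ ab.1 ab.2.
  by case: #|cprod R ab.1 ab.2| => [|[|[|]]].
rewrite (eq_bigr (fun ab => 1 + (#|cprod R ab.1 ab.2| == 2))); last by move=> ab _; exact: Hin.
rewrite big_split /= sum1_card card_prod card_ord.
congr (_ + _); rewrite -sum1dep_card.
by rewrite [RHS]big_mkcond /=; apply: eq_bigr => ab _; case: (_ == 2).
Qed.
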